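(* If a Markov category $\mathcal C$ is causal, then $\mathcal C$ is relatively positive.
   Context: A Markov category is a symmetric monoidal category $(\mathcal C,\otimes,I)$ with commutative comonoids $\mathrm{copy}_X\colon X\to X\otimes X$, $\mathrm{del}_X\colon X\to I$ compatible with $\otimes$, with $I$ terminal. For $m\colon\Theta\to A$ and $f,g\colon A\to Z$, $f$ and $g$ are $m$-almost surely equal if $(\mathrm{id}_A\otimes f)\circ\mathrm{copy}_A\circ m=(\mathrm{id}_A\otimes g)\circ\mathrm{copy}_A\circ m$. $\mathcal C$ is relatively positive if for all $p\colon\Theta\to X$, $f\colon X\to Y$, $g\colon Y\to Z$ such that $\mathrm{copy}_Z\circ g\circ f$ and $((g\circ f)\otimes(g\circ f))\circ\mathrm{copy}_X$ are $p$-almost surely equal, the morphisms $(\mathrm{id}_Y\otimes g)\circ\mathrm{copy}_Y\circ f$ and $(f\otimes(g\circ f))\circ\mathrm{copy}_X$ are $p$-almost surely equal. $\mathcal C$ is causal if for all $f\colon A\to W$, $g\colon W\to X$, $h_1,h_2\colon X\to Y$ with $(\mathrm{id}_X\otimes h_1)\circ\mathrm{copy}_X\circ g\circ f=(\mathrm{id}_X\otimes h_2)\circ\mathrm{copy}_X\circ g\circ f$, also $\big(\mathrm{id}_W\otimes((\mathrm{id}_X\otimes h_1)\circ\mathrm{copy}_X\circ g)\big)\circ\mathrm{copy}_W\circ f=\big(\mathrm{id}_W\otimes((\mathrm{id}_X\otimes h_2)\circ\mathrm{copy}_X\circ g)\big)\circ\mathrm{copy}_W\circ f$. *)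

(* Defs.v *)
(* Hom-sets are
   types and equality of morphisms is Leibniz equality. *)

Set Implicit Arguments.

Record MarkovCat := {
  ob : Type;
  hom : ob -> ob -> Type;
  idm : forall A, hom A A;
  comp : forall A B C, hom B C -> hom A B -> hom A C;
  comp_idl : forall A B (f : hom A B), comp (idm B) f = f;
  comp_idr : forall A B (f : hom A B), comp f (idm A) = f;
  comp_assoc : forall A B C D (h : hom C D) (g : hom B C) (f : hom A B),
      comp h (comp g f) = comp (comp h g) f;

  tens : ob -> ob -> ob;
  tensm : forall A B C D, hom A B -> hom C D -> hom (tens A C) (tens B D);
  tensm_id : forall A B, tensm (idm A) (idm B) = idm (tens A B);
  tensm_comp : forall A B C A' B' C' (g : hom B C) (f : hom A B)
      (g' : hom B' C') (f' : hom A' B'),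
      tensm (comp g f) (comp g' f') = comp (tensm g g') (tensm f f');
  unit : ob;

  assoc : forall A B C, hom (tens (tens A B) C) (tens A (tens B C));
  assoc_inv : forall A B C, hom (tens A (tens B C)) (tens (tens A B) C);
  assoc_inv_l : forall A B C, comp (assoc_inv A B C) (assoc A B C) = idm _;
  assoc_inv_r : forall A B C, comp (assoc A B C) (assoc_inv A B C) = idm _;
  lunit : forall A, hom (tens unit A) A;
  lunit_inv : forall A, hom A (tens unit A);
  lunit_inv_l : forall A, comp (lunit_inv A) (lunit A) = idm _;
  lunit_inv_r : forall A, comp (lunit A) (lunit_inv A) = idm _;
  runit : forall A, hom (tens A unit) A;
  runit_inv : forall A, hom A (tens A unit);
  runit_inv_l : forall A, comp (runit_inv A) (runit A) = idm _;
  runit_inv_r : forall A, comp (runit A) (runit_inv A) = idm _;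
  braid : forall A B, hom (tens A B) (tens B A);

  assoc_nat : forall A A' B B' C C' (f : hom A A') (g : hom B B') (h : hom C C'),
      comp (assoc A' B' C') (tensm (tensm f g) h)
      = comp (tensm f (tensm g h)) (assoc A B C);
  lunit_nat : forall A B (f : hom A B),
      comp (lunit B) (tensm (idm unit) f) = comp f (lunit A);
  runit_nat : forall A B (f : hom A B),
      comp (runit B) (tensm f (idm unit)) = comp f (runit A);
  braid_nat : forall A A' B B' (f : hom A A') (g : hom B B'),
      comp (braid A' B') (tensm f g) = comp (tensm g f) (braid A B);

  pentagon : forall A B C D,
      comp (assoc A B (tens C D)) (assoc (tens A B) C D)
      = comp (tensm (idm A) (assoc B C D))
          (comp (assoc A (tens B C) D) (tensm (assoc A B C) (idm D)));
  triangle : forall A B,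
      comp (tensm (idm A) (lunit B)) (assoc A unit B)
      = tensm (runit A) (idm B);
  hexagon : forall A B C,
      comp (assoc B C A) (comp (braid A (tens B C)) (assoc A B C))
      = comp (tensm (idm B) (braid A C))
          (comp (assoc B A C) (tensm (braid A B) (idm C)));
  braid_sym : forall A B, comp (braid B A) (braid A B) = idm (tens A B);

  copy : forall X, hom X (tens X X);
  del : forall X, hom X unit;
  copy_counit_l : forall X,
      comp (lunit X) (comp (tensm (del X) (idm X)) (copy X)) = idm X;
  copy_counit_r : forall X,
      comp (runit X) (comp (tensm (idm X) (del X)) (copy X)) = idm X;
  copy_coassoc : forall X,
      comp (assoc X X X) (comp (tensm (copy X) (idm X)) (copy X))
      = comp (tensm (idm X) (copy X)) (copy X);
  copy_comm : forall X, comp (braid X X) (copy X) = copy X;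

  copy_tens : forall X Y,
      copy (tens X Y)
      = comp (assoc_inv X Y (tens X Y))
        (comp (tensm (idm X) (assoc Y X Y))
        (comp (tensm (idm X) (tensm (braid X Y) (idm Y)))
        (comp (tensm (idm X) (assoc_inv X Y Y))
        (comp (assoc X X (tens Y Y))
              (tensm (copy X) (copy Y))))));
  del_tens : forall X Y,
      del (tens X Y) = comp (lunit unit) (tensm (del X) (del Y));
  copy_unit : copy unit = lunit_inv unit;
  del_unit : del unit = idm unit;

  del_unique : forall X (f : hom X unit), f = del X
}.

Arguments hom {m} _ _.
Arguments idm {m} A.
Arguments comp {m A B C} g f.
Arguments tensm {m A B C D} f g.
Arguments copy {m} X.
Arguments del {m} X.

Definition as_eq {C : MarkovCat} {T A Z : ob C} (m : hom T A) (f g : hom A Z) : Prop :=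
  comp (comp (tensm (idm A) f) (copy A)) m
  = comp (comp (tensm (idm A) g) (copy A)) m.

Definition relatively_positive (C : MarkovCat) : Prop :=
  forall (T X Y Z : ob C) (p : hom T X) (f : hom X Y) (g : hom Y Z),
    as_eq p (comp (copy Z) (comp g f))
            (comp (tensm (comp g f) (comp g f)) (copy X)) ->
    as_eq p (comp (comp (tensm (idm Y) g) (copy Y)) f)
            (comp (tensm f (comp g f)) (copy X)).

Definition causal (C : MarkovCat) : Prop :=
  forall (A W X Y : ob C) (f : hom A W) (g : hom W X) (h1 h2 : hom X Y),
    comp (comp (comp (tensm (idm X) h1) (copy X)) g) f
    = comp (comp (comp (tensm (idm X) h2) (copy X)) g) f ->
    comp (comp (tensm (idm W) (comp (comp (tensm (idm X) h1) (copy X)) g)) (copy W)) f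
    = comp (comp (tensm (idm W) (comp (comp (tensm (idm X) h2) (copy X)) g)) (copy W)) f.

(* Main.v *)
Require Import Defs.

Arguments assoc {m} A B C.
Arguments assoc_inv {m} A B C.
Arguments lunit {m} A.
Arguments lunit_inv {m} A.
Arguments runit {m} A.
Arguments runit_inv {m} A.
Arguments braid {m} A B.
Arguments unit {m}.
Arguments tens {m} _ _.

Local Notation "g ∘ f" := (comp g f) (at level 40, left associativity).
Local Notation "f ⊗ g" := (tensm f g) (at level 30).


Lemma tsl {C : MarkovCat} (A B A' B' : ob C) (f : hom A B) (g : hom A' B') :
  f ⊗ g = (f ⊗ idm B') ∘ (idm A ⊗ g).
Proof. rewrite <- tensm_comp, comp_idl, comp_idr. reflexivity. Qed.

Lemma tsr {C : MarkovCat} (A B A' B' : ob C) (f : hom A B) (g : hom A' B') :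
  f ⊗ g = (idm B ⊗ g) ∘ (f ⊗ idm A').
Proof. rewrite <- tensm_comp, comp_idl, comp_idr. reflexivity. Qed.

Lemma tc {C : MarkovCat} (A B D A' B' D' : ob C) (g : hom B D) (f : hom A B)
  (g' : hom B' D') (f' : hom A' B') :
  (g ⊗ g') ∘ (f ⊗ f') = (g ∘ f) ⊗ (g' ∘ f').
Proof. rewrite tensm_comp. reflexivity. Qed.

Lemma tidl {C : MarkovCat} (X A B D : ob C) (g : hom B D) (f : hom A B) :
  idm X ⊗ (g ∘ f) = (idm X ⊗ g) ∘ (idm X ⊗ f).
Proof. rewrite tc, comp_idl. reflexivity. Qed.

Lemma tidr {C : MarkovCat} (X A B D : ob C) (g : hom B D) (f : hom A B) :
  (g ∘ f) ⊗ idm X = (g ⊗ idm X) ∘ (f ⊗ idm X).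
Proof. rewrite tc, comp_idl. reflexivity. Qed.

Lemma assoc_inv_nat {C : MarkovCat} (A A' B B' D D' : ob C) (f : hom A A') (g : hom B B') (h : hom D D') :
  assoc_inv A' B' D' ∘ (f ⊗ (g ⊗ h)) = ((f ⊗ g) ⊗ h) ∘ assoc_inv A B D.
Proof.
  transitivity (assoc_inv A' B' D' ∘ (f ⊗ (g ⊗ h)) ∘ (assoc A B D ∘ assoc_inv A B D)).
  { rewrite assoc_inv_r, comp_idr. reflexivity. }
  rewrite comp_assoc, <- (comp_assoc _ _ _ _ _ (assoc_inv A' B' D')), <- assoc_nat.
  rewrite !comp_assoc, assoc_inv_l, comp_idl. reflexivity.
Qed.

Lemma del_copy_r {C : MarkovCat} (X : ob C) : (idm X ⊗ del X) ∘ copy X = runit_inv X.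
Proof.
  transitivity (runit_inv X ∘ runit X ∘ ((idm X ⊗ del X) ∘ copy X)).
  { rewrite runit_inv_l, comp_idl. reflexivity. }
  rewrite <- comp_assoc, copy_counit_r, comp_idr. reflexivity.
Qed.

Lemma del_copy_l {C : MarkovCat} (X : ob C) : (del X ⊗ idm X) ∘ copy X = lunit_inv X.
Proof.
  transitivity (lunit_inv X ∘ lunit X ∘ ((del X ⊗ idm X) ∘ copy X)).
  { rewrite lunit_inv_l, comp_idl. reflexivity. }
  rewrite <- comp_assoc, copy_counit_l, comp_idr. reflexivity.
Qed.

Lemma lcancel {C : MarkovCat} (A B : ob C) (f g : hom A B) :
  idm unit ⊗ f = idm unit ⊗ g -> f = g.
Proof.
  intro H.
  transitivity (lunit B ∘ (idm unit ⊗ f) ∘ lunit_inv A).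
  { rewrite lunit_nat, <- comp_assoc, lunit_inv_r, comp_idr. reflexivity. }
  rewrite H, lunit_nat, <- comp_assoc, lunit_inv_r, comp_idr. reflexivity.
Qed.

Lemma rcancel {C : MarkovCat} (A B : ob C) (f g : hom A B) :
  f ⊗ idm unit = g ⊗ idm unit -> f = g.
Proof.
  intro H.
  transitivity (runit B ∘ (f ⊗ idm unit) ∘ runit_inv A).
  { rewrite runit_nat, <- comp_assoc, runit_inv_r, comp_idr. reflexivity. }
  rewrite H, runit_nat, <- comp_assoc, runit_inv_r, comp_idr. reflexivity.
Qed.

Lemma rho_braid {C : MarkovCat} (Z : ob C) : runit Z ∘ braid unit Z = lunit Z.
Proof.
  assert (E : runit Z ∘ braid unit Z ∘ lunit_inv Z = lunit Z ∘ lunit_inv Z).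
  { rewrite <- del_copy_l, !comp_assoc, <- (comp_assoc _ _ _ _ _ (runit Z)), braid_nat.
    rewrite <- !comp_assoc, copy_comm, copy_counit_r, copy_counit_l. reflexivity. }
  transitivity (runit Z ∘ braid unit Z ∘ lunit_inv Z ∘ lunit Z).
  { rewrite <- comp_assoc, lunit_inv_l, comp_idr. reflexivity. }
  rewrite E, <- comp_assoc, lunit_inv_l, comp_idr. reflexivity.
Qed.

Lemma cancel_r {C : MarkovCat} (A B D : ob C) (f g : hom B D) (P : hom A B) (Q : hom B A) :
  P ∘ Q = idm B -> f ∘ P = g ∘ P -> f = g.
Proof.
  intros HPQ H.
  rewrite <- (comp_idr _ _ _ f), <- (comp_idr _ _ _ g), <- HPQ, !comp_assoc, H. reflexivity.
Qed.

Lemma cancel_l {C : MarkovCat} (A B D : ob C) (f g : hom D A) (P : hom A B) (Q : hom B A) :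
  Q ∘ P = idm A -> P ∘ f = P ∘ g -> f = g.
Proof.
  intros HPQ H.
  rewrite <- (comp_idl _ _ _ f), <- (comp_idl _ _ _ g), <- HPQ, <- !comp_assoc, H. reflexivity.
Qed.

Lemma kelly_l {C : MarkovCat} (A B : ob C) :
  lunit (tens A B) ∘ assoc unit A B = lunit A ⊗ idm B.
Proof.
  apply lcancel.
  apply (cancel_r _ _ _ _ _ (assoc unit (tens unit A) B ∘ (assoc unit unit A ⊗ idm B))
                          ((assoc_inv unit unit A ⊗ idm B) ∘ assoc_inv unit (tens unit A) B)).
  { rewrite comp_assoc. rewrite <- (comp_assoc _ _ _ _ _ (assoc _ _ _)). rewrite (tc (C:=C)), assoc_inv_r, comp_idl, tensm_id,
      comp_idr, assoc_inv_r. reflexivity. }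
  transitivity ((runit unit ⊗ idm (tens A B)) ∘ assoc (tens unit unit) A B).
  { rewrite tidl.
    rewrite <- !comp_assoc, <- pentagon.
    rewrite comp_assoc, triangle. reflexivity. }
  rewrite <- tensm_id, <- assoc_nat, <- triangle.
  rewrite tidr.
  rewrite !comp_assoc, assoc_nat. reflexivity.
Qed.

Lemma kelly_r {C : MarkovCat} (A B : ob C) :
  (idm A ⊗ runit B) ∘ assoc A B unit = runit (tens A B).
Proof.
  apply rcancel.
  apply (cancel_l _ _ _ _ _ (assoc A B unit) (assoc_inv A B unit)).
  { apply assoc_inv_l. }
  symmetry.
  rewrite <- triangle, <- tensm_id, comp_assoc. rewrite (assoc_nat C A A B B _ _ (idm A) (idm B) (lunit unit)).
  rewrite <- !comp_assoc, pentagon.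
  rewrite !comp_assoc, <- tidl, triangle, <- assoc_nat.
  rewrite tidr, !comp_assoc. reflexivity.
Qed.

Lemma cx {C : MarkovCat} {A B D E : ob C} {g : hom B D} {f : hom A B} {h : hom A D} {x : hom D E} :
  g ∘ f = h -> x ∘ g ∘ f = x ∘ h.
Proof. intro H. rewrite <- comp_assoc, H. reflexivity. Qed.

Lemma cx3 {C : MarkovCat} {A B D E F : ob C} {k : hom D E} {g : hom B D} {f : hom A B} {h : hom A E} {x : hom E F} :
  k ∘ g ∘ f = h -> x ∘ k ∘ g ∘ f = x ∘ h.
Proof. intro H. rewrite <- (comp_assoc _ _ _ _ _ (x ∘ k)), <- comp_assoc, <- H, !comp_assoc. reflexivity. Qed.

Lemma cx4 {C : MarkovCat} {A B D E F G : ob C} {l : hom E F} {k : hom D E} {g : hom B D} {f : hom A B} {h : hom A F} {x : hom F G} :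
  l ∘ k ∘ g ∘ f = h -> x ∘ l ∘ k ∘ g ∘ f = x ∘ h.
Proof. intro H. rewrite <- H, !comp_assoc. reflexivity. Qed.

Ltac inst H := lazymatch type of H with
 | forall x : ?T, _ => let v := fresh "v" in evar (v : T); specialize (H v); unfold v in H; clear v; inst H
 | _ => idtac end.

Ltac rwH H := first [rewrite H | rewrite (cx H) | rewrite (cx3 H) | rewrite (cx4 H)]; rewrite ?comp_assoc.
Ltac rwl L := let H := fresh "H" in pose proof L as H; inst H; rwH H; clear H.
Ltac rwr L := let H := fresh "H" in pose proof L as H; inst H; symmetry in H; rwH H; clear H.
Ltac la := rewrite ?comp_assoc.

Lemma lunit_tens_inv {C : MarkovCat} (A B : ob C) :
  (lunit A ⊗ idm B) ∘ assoc_inv unit A B = lunit (tens A B).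
Proof. rewrite <- kelly_l, <- comp_assoc, assoc_inv_r, comp_idr. reflexivity. Qed.

Lemma P2_inner {C : MarkovCat} (A B : ob C) :
  (idm B ⊗ (lunit B ∘ (del A ⊗ idm B))) ∘ assoc B A B ∘ (braid A B ⊗ idm B) ∘ assoc_inv A B B
  = lunit (tens B B) ∘ (del A ⊗ idm (tens B B)).
Proof.
  rewrite tidl. la. rwr assoc_nat. rwl triangle. rwr @tidr. rwr @tidr. rwr braid_nat. rwl @rho_braid. rwl @tidr. rwr @assoc_inv_nat. rwl @lunit_tens_inv. rewrite tensm_id. reflexivity. Qed.


Lemma P2 {C : MarkovCat} (A B : ob C) :
  (idm (tens A B) ⊗ (lunit B ∘ (del A ⊗ idm B))) ∘ copy (tens A B)
  = assoc_inv A B B ∘ (idm A ⊗ copy B).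
Proof.
  rewrite copy_tens. la. rewrite <- tensm_id. rwr @assoc_inv_nat.
  rwr @tidl. rwr @tidl. rwr @tidl. rewrite P2_inner.
  rwl @tidl. rwr assoc_nat. rwl triangle. rwl @tc. rwl @tc.
  rwl @del_copy_r. rewrite runit_inv_r, !comp_idl. reflexivity.
Qed.

Lemma kelly_r_inv {C : MarkovCat} (A B : ob C) :
  runit (tens A B) ∘ assoc_inv A B unit = idm A ⊗ runit B.
Proof. rewrite <- kelly_r, <- comp_assoc, assoc_inv_r, comp_idr. reflexivity. Qed.

Lemma P1_inner {C : MarkovCat} (A B : ob C) :
  (idm B ⊗ (runit A ∘ (idm A ⊗ del B))) ∘ assoc B A B ∘ (braid A B ⊗ idm B) ∘ assoc_inv A B B
  = braid A B ∘ (idm A ⊗ (runit B ∘ (idm B ⊗ del B))).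
Proof.
  rewrite tidl. la. rwr assoc_nat. rwl @kelly_r. rewrite tensm_id. rwl @tc.
  rewrite comp_idl, comp_idr. rewrite (tsl _ _ _ _ (braid A B)). la. rwl runit_nat.
  rewrite <- tensm_id. rwr @assoc_inv_nat. rwl @kelly_r_inv. rwr @tidl. reflexivity.
Qed.

Lemma P1 {C : MarkovCat} (A B : ob C) :
  (idm (tens A B) ⊗ (runit A ∘ (idm A ⊗ del B))) ∘ copy (tens A B)
  = assoc_inv A B A ∘ (idm A ⊗ braid A B) ∘ assoc A A B ∘ (copy A ⊗ idm B).
Proof.
  rewrite copy_tens. la. rewrite <- tensm_id. rwr @assoc_inv_nat.
  rwr @tidl. rwr @tidl. rwr @tidl. rewrite P1_inner.
  rwl @tidl. rwr assoc_nat. rwl @tc. rwl @del_copy_r. rewrite runit_inv_r, tensm_id, !comp_idl.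
  reflexivity.
Qed.

Lemma P1s {C : MarkovCat} (A B : ob C) :
  (idm (tens A B) ⊗ runit A) ∘ (idm (tens A B) ⊗ (idm A ⊗ del B)) ∘ copy (tens A B)
  = assoc_inv A B A ∘ (idm A ⊗ braid A B) ∘ assoc A A B ∘ (copy A ⊗ idm B).
Proof. rewrite <- tidl. apply P1. Qed.

Lemma P2s {C : MarkovCat} (A B : ob C) :
  (idm (tens A B) ⊗ lunit B) ∘ (idm (tens A B) ⊗ (del A ⊗ idm B)) ∘ copy (tens A B)
  = assoc_inv A B B ∘ (idm A ⊗ copy B).
Proof. rewrite <- tidl. apply P2. Qed.

Lemma copy_id_nat {C : MarkovCat} (A B B' : ob C) (k : hom B B') :
  (copy A ⊗ idm B') ∘ (idm A ⊗ k) = ((idm A ⊗ idm A) ⊗ k) ∘ (copy A ⊗ idm B).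
Proof. rewrite tensm_id, !tc, !comp_idl, !comp_idr. reflexivity. Qed.

Lemma coassoc' {C : MarkovCat} (X : ob C) :
  assoc X X X ∘ (copy X ⊗ idm X) ∘ copy X = (idm X ⊗ copy X) ∘ copy X.
Proof. rewrite <- comp_assoc. apply copy_coassoc. Qed.

Lemma post {C : MarkovCat} (W Xc Z : ob C) (G : hom W Xc) (h : hom Xc Z) :
  (idm W ⊗ (lunit Z ∘ (del Xc ⊗ idm Z))) ∘ (idm W ⊗ ((idm Xc ⊗ h) ∘ copy Xc ∘ G))
  = idm W ⊗ (h ∘ G).
Proof.
  rewrite <- tidl. f_equal. la. rwl @tc. rewrite comp_idl, comp_idr.
  rewrite (tsr _ _ _ _ (del Xc) h). la. rwl lunit_nat. rwl @del_copy_l.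
  rwl lunit_inv_r. rewrite comp_idr. reflexivity.
Qed.

Lemma L_a {C : MarkovCat} (X Y Z : ob C) (g : hom Y Z) :
  lunit Z ∘ (del X ⊗ idm Z) ∘ (idm X ⊗ g) = g ∘ lunit Y ∘ (del X ⊗ idm Y).
Proof.
  la. rwl @tc. rewrite comp_idl, comp_idr. rewrite (tsr _ _ _ _ (del X) g). la.
  rwl lunit_nat. reflexivity.
Qed.

Lemma side1 {C : MarkovCat} (T X Y Z : ob C) (p : hom T X) (f : hom X Y) (g : hom Y Z) :
  assoc X Y Z ∘ (idm (tens X Y) ⊗ (lunit Z ∘ (del (tens X Z) ⊗ idm Z))) ∘
  comp (comp (tensm (idm (tens X Y)) (comp (comp (tensm (idm (tens X Z)) (lunit Z ∘ (del X ⊗ idm Z))) (copy (tens X Z))) (idm X ⊗ g))) (copy (tens X Y))) ((idm X ⊗ f) ∘ copy X ∘ p)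
  = comp (comp (tensm (idm X) (comp (comp (tensm (idm Y) g) (copy Y)) f)) (copy X)) p.
Proof.
  la. rwl @post. rwl @L_a. rewrite ?tidl. la. rwl @P2s.
  rewrite <- tensm_id. rwr @assoc_inv_nat. rwl assoc_inv_r. rewrite comp_idl.
  reflexivity.
Qed.

Lemma side2 {C : MarkovCat} (T X Y Z : ob C) (p : hom T X) (f : hom X Y) (g : hom Y Z) (k : hom X Z) :
  assoc X Y Z ∘ (idm (tens X Y) ⊗ (lunit Z ∘ (del (tens X Z) ⊗ idm Z))) ∘
  comp (comp (tensm (idm (tens X Y)) (comp (comp (tensm (idm (tens X Z)) (k ∘ (runit X ∘ (idm X ⊗ del Z)))) (copy (tens X Z))) (idm X ⊗ g))) (copy (tens X Y))) ((idm X ⊗ f) ∘ copy X ∘ p)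
  = comp (comp (tensm (idm X) (comp (tensm f k) (copy X))) (copy X)) p.
Proof.
  la. rwl @post. rwl @tc. rewrite comp_idl. rewrite (del_unique _ _ (del Z ∘ g)).
  rewrite ?tidl. la. rwl @P1s.
  rewrite <- tensm_id. rwr @assoc_inv_nat. rwl assoc_inv_r. rewrite comp_idl.
  rwl @copy_id_nat. rwl assoc_nat. rwl @coassoc'.
  repeat rwr @tidl. rwl braid_nat. rwl copy_comm. rwl @tc. rewrite comp_idl, comp_idr.
  reflexivity.
Qed.

Lemma rhs_prem {C : MarkovCat} (T X Z : ob C) (p : hom T X) (k : hom X Z) :
  (idm (tens X Z) ⊗ (k ∘ runit X ∘ (idm X ⊗ del Z))) ∘ copy (tens X Z) ∘ (idm X ⊗ k) ∘ copy X ∘ p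
  = assoc_inv X Z Z ∘ (idm X ⊗ ((k ⊗ k) ∘ copy X)) ∘ copy X ∘ p.
Proof.
  rewrite ?tidl. la. rwl @P1s. rwl @copy_id_nat. rwl assoc_nat. rwl @coassoc'.
  rewrite <- tensm_id. rwr @assoc_inv_nat.
  repeat rwr @tidl. rwl braid_nat. rwl copy_comm. rwl @tc. rewrite comp_idl, comp_idr.
  reflexivity.
Qed.

Theorem corollary2p28 (C : MarkovCat) : causal C -> relatively_positive C.
Proof.
  intros Hc T X Y Z p f g H. unfold as_eq in *.
  assert (Pr : comp (comp (comp (tensm (idm (tens X Z)) (lunit Z ∘ (del X ⊗ idm Z))) (copy (tens X Z))) (idm X ⊗ g)) ((idm X ⊗ f) ∘ copy X ∘ p)
             = comp (comp (comp (tensm (idm (tens X Z)) ((g ∘ f) ∘ (runit X ∘ (idm X ⊗ del Z)))) (copy (tens X Z))) (idm X ⊗ g)) ((idm X ⊗ f) ∘ copy X ∘ p)).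
  { rewrite P2. la. repeat rwr @tidl.
    rewrite <- (comp_assoc _ _ _ _ _ (copy Z) g f).
    remember (g ∘ f) as k eqn:Hk.
    rewrite ?comp_assoc in H. rwl H. symmetry. apply rhs_prem. }
  pose proof (Hc _ _ _ _ _ _ _ _ Pr) as Cc.
  etransitivity; [symmetry; apply side1|].
  rewrite Cc. apply side2.
Qed.
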